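(* In every run of the algorithm described in the context in which at most $t$ processes crash, if the writer $p_w$ does not crash during an invocation of $\mathsf{write}()$, then this invocation terminates.
   Context: Model. There are $n$ asynchronous processes $p_1,\dots,p_n$, of which up to $t<n/2$ may crash; a process runs its algorithm correctly until it crashes, and a process that never crashes is correct. Each ordered pair of processes is linked by a reliable (no loss, corruption, duplication or creation; every message sent to a correct process is eventually received), asynchronous, not necessarily FIFO channel. $p_w$ is the single writer, invoking writes sequentially; $v_0$ is the initial value. Messages: $\textsc{write}(b,v)$ with $b\in\{0,1\}$, which stands for the two types $\textsc{write0}(v)$ and $\textsc{write1}(v)$; $\textsc{read}()$; $\textsc{proceed}()$. Variables of $p_i$. These are: $history_i$ with $history_i[0]=v_0$; $w\_sync_i[1..n]$, initially all $0$; $r\_sync_i[1..n]$, initially all $0$. $\mathsf{write}(v)$ by $p_w$: $wsn\gets w\_sync_w[w]+1$; $w\_sync_w[w]\gets wsn$; $history_w[wsn]\gets v$. Send $\textsc{write}(wsn\bmod 2,v)$ to each $p_j$ with $w\_sync_w[j]=wsn-1$. Wait until at least $n-t$ indices $j$ have $w\_sync_w[j]=wsn$. Return. $\mathsf{read}()$ by $p_i$: $r\_sync_i[i]\gets r\_sync_i[i]+1$ and call the new value $rsn$. Send $\textsc{read}()$ to all $p_j$ with $j\ne i$. Wait until at least $n-t$ indices $j$ have $r\_sync_i[j]=rsn$. Let $sn\gets w\_sync_i[i]$. Wait until at least $n-t$ indices $j$ have $w\_sync_i[j]\ge sn$. Return $history_i[sn]$. On receipt of $\textsc{write}(b,v)$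 from $p_j$ at $p_i$: Wait until $b=(w\_sync_i[j]+1)\bmod 2$. Let $wsn\gets w\_sync_i[j]+1$. If $wsn=w\_sync_i[i]+1$, then set $w\_sync_i[i]\gets wsn$ and $history_i[wsn]\gets v$, and send $\textsc{write}(wsn\bmod 2,v)$ to each $p_\ell$ with $w\_sync_i[\ell]=wsn-1$. Else, if $wsn<w\_sync_i[i]$, send $\textsc{write}((wsn+1)\bmod 2,history_i[wsn+1])$ to $p_j$. Finally set $w\_sync_i[j]\gets wsn$. On receipt of $\textsc{read}()$ from $p_j$ at $p_i$: Let $sn\gets w\_sync_i[i]$; wait until $w\_sync_i[j]\ge sn$; send $\textsc{proceed}()$ to $p_j$. On receipt of $\textsc{proceed}()$ from $p_j$ at $p_i$: $r\_sync_i[j]\gets r\_sync_i[j]+1$. Message handlers run concurrently; a waiting handler does not block the reception of other messages. *)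

(* Defs.v *)
From Stdlib Require Lists.List.
From mathcomp Require Import all_boot.

Section Model.
Variables (n t : nat) (V : Type) (v0 : V) (w : 'I_n).

(* Messages: WRITE(b,v) with b in {0,1} (encoded as a nat b = wsn %% 2),
   READ(), PROCEED(). *)
Inductive Msg := MWrite of nat & V | MRead | MProceed.

Record Packet := Pkt { pid : nat; psrc : 'I_n; pdst : 'I_n; pmsg : Msg }.

(* A message handler suspended on a "wait until":
   TWrite j b v : handler of WRITE(b,v) received from p_j;
   TRead j sn   : handler of READ() received from p_j, with sn = w_sync_i[i]
                  computed at receipt. *)
Inductive Task := TWrite of 'I_n & nat & V | TRead of 'I_n & nat.

Inductive OpSt :=
  | OIdle
  | OWrite of nat         (* write, waiting for n-t indices with w_sync = wsn *)
  | ORead1 of nat         (* read, first wait (rsn) *)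
  | ORead2 of nat.        (* read, second wait (sn) *)

Record LState := LS {
  hist  : nat -> V;
  wsync : 'I_n -> nat;
  rsync : 'I_n -> nat;
  op    : OpSt;
  tasks : seq (nat * Task) }.

Record Config := Cfg { loc : 'I_n -> LState; net : seq Packet; ctr : nat }.

Inductive Action :=
  | ARecv of nat        (* receive the message with the given id *)
  | AFire of nat        (* resume the suspended handler with the given id *)
  | AInvWrite of V
  | AInvRead
  | AOp.                (* resume the pending operation past its wait *)

Definition is_idle (o : OpSt) : bool := if o is OIdle then true else false.

Definition updf (f : 'I_n -> nat) (j : 'I_n) (x : nat) : 'I_n -> nat :=
  fun k => if k == j then x else f k.
Definition updh (h : nat -> V) (m : nat) (x : V) : nat -> V :=
  fun k => if k == m then x else h k.

Definition set_wsync s f := LS (hist s) f (rsync s) (op s) (tasks s).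
Definition set_rsync s f := LS (hist s) (wsync s) f (op s) (tasks s).
Definition set_hist s h := LS h (wsync s) (rsync s) (op s) (tasks s).
Definition set_op s o := LS (hist s) (wsync s) (rsync s) o (tasks s).
Definition set_tasks s ts := LS (hist s) (wsync s) (rsync s) (op s) ts.

Fixpoint mkpkts (id : nat) (src : 'I_n) (m : Msg) (ds : seq 'I_n) : seq Packet :=
  match ds with
  | [::] => [::]
  | d :: ds' => Pkt id src d m :: mkpkts id.+1 src m ds'
  end.

Definition commit (c : Config) (i : 'I_n) (s : LState) (ds : seq 'I_n) (m : Msg)
  : Config :=
  Cfg (fun j => if j == i then s else loc c j)
      (net c ++ mkpkts (ctr c) i m ds) (ctr c + size ds).

Definition task_cond (s : LState) (T : Task) : bool :=
  match T with
  | TWrite j b _ => b == (wsync s j + 1) %% 2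
  | TRead j sn => sn <= wsync s j
  end.

Definition op_cond (s : LState) : bool :=
  match op s with
  | OIdle => false
  | OWrite wsn => n - t <= #|[pred j : 'I_n | wsync s j == wsn]|
  | ORead1 rsn => n - t <= #|[pred j : 'I_n | rsync s j == rsn]|
  | ORead2 sn => n - t <= #|[pred j : 'I_n | sn <= wsync s j]|
  end.

Definition task_enabled (s : LState) (id : nat) : bool :=
  has (fun p => (p.1 == id) && task_cond s p.2) (tasks s).

Definition op_enabled (s : LState) : bool := op_cond s.

(* Body of a suspended handler once its wait condition holds
   (run atomically). Returns new local state, destinations, message. *)
Definition run_task (i : 'I_n) (s : LState) (T : Task)
  : LState * seq 'I_n * Msg :=
  match T with
  | TWrite j b v =>
      let wsn := wsync s j + 1 in
      if wsn == wsync s i + 1 then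
        let s1 := set_hist (set_wsync s (updf (wsync s) i wsn)) (updh (hist s) wsn v) in
        (set_wsync s1 (updf (wsync s1) j wsn),
         [seq l <- enum 'I_n | wsync s1 l == wsn - 1], MWrite (wsn %% 2) v)
      else if wsn < wsync s i then
        (set_wsync s (updf (wsync s) j wsn),
         [:: j], MWrite ((wsn + 1) %% 2) (hist s (wsn + 1)))
      else (set_wsync s (updf (wsync s) j wsn), [::], MProceed)
  | TRead j _ => (s, [:: j], MProceed)
  end.

Definition exec (c : Config) (i : 'I_n) (a : Action) : option Config :=
  let s := loc c i in
  match a with
  | ARecv id =>
      match [seq q <- net c | pid q == id] with
      | p :: _ =>
          if pdst p == i then
            let c0 := Cfg (loc c) [seq q <- net c | pid q != id] (ctr c) in
            match pmsg p with
            | MWrite b v =>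
                Some (Cfg (fun j => if j == i then
                              set_tasks s ((ctr c, TWrite (psrc p) b v) :: tasks s)
                            else loc c j) (net c0) (ctr c).+1)
            | MRead =>
                Some (Cfg (fun j => if j == i then
                              set_tasks s ((ctr c, TRead (psrc p) (wsync s i)) :: tasks s)
                            else loc c j) (net c0) (ctr c).+1)
            | MProceed =>
                Some (commit c0 i (set_rsync s (updf (rsync s) (psrc p)
                                                 (rsync s (psrc p)).+1)) [::] MProceed)
            end
          else None
      | [::] => None
      end
  | AFire id =>
      match [seq p <- tasks s | p.1 == id] with
      | p :: _ =>
          if task_cond s p.2 then
            let s' := set_tasks s [seq q <- tasks s | q.1 != id] in
            let: (s2, ds, m) := run_task i s' p.2 in
            Some (commit c i s2 ds m)
          else None
      | [::] => None
      end
  | AInvWrite v =>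
      if (i == w) && is_idle (op s) then
        let wsn := wsync s w + 1 in
        let s1 := set_op (set_hist (set_wsync s (updf (wsync s) w wsn))
                                   (updh (hist s) wsn v)) (OWrite wsn) in
        Some (commit c i s1 [seq j <- enum 'I_n | wsync s1 j == wsn - 1]
                     (MWrite (wsn %% 2) v))
      else None
  | AInvRead =>
      if is_idle (op s) then
        let rsn := rsync s i + 1 in
        let s1 := set_op (set_rsync s (updf (rsync s) i rsn)) (ORead1 rsn) in
        Some (commit c i s1 [seq j <- enum 'I_n | j != i] MRead)
      else None
  | AOp =>
      if op_cond s then
        match op s with
        | OIdle => None
        | OWrite _ => Some (commit c i (set_op s OIdle) [::] MProceed)
        | ORead1 _ => Some (commit c i (set_op s (ORead2 (wsync s i))) [::] MProceed)
        | ORead2 _ => (* returns hist s sn *)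
            Some (commit c i (set_op s OIdle) [::] MProceed)
        end
      else None
  end.

Definition init_state : LState :=
  LS (fun _ => v0) (fun _ => 0) (fun _ => 0) OIdle [::].

Definition init_config : Config := Cfg (fun _ => init_state) [::] 0.

(* crash i = Some tc : p_i crashes at time tc (takes no step at times >= tc);
   crash i = None : p_i is correct. *)
Definition alive (crash : 'I_n -> option nat) (i : 'I_n) (k : nat) : bool :=
  if crash i is Some tc then k < tc else true.

Definition correct (crash : 'I_n -> option nat) (i : 'I_n) : Prop := crash i = None.

(* An (infinite, fair) run: c k is the configuration at time k, a k the
   step taken between times k and k+1 (None = no process steps). *)
Record run (c : nat -> Config) (a : nat -> option ('I_n * Action))
    (crash : 'I_n -> option nat) : Prop := {
  run_init : c 0 = init_config;
  run_step : forall k, match a k with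
                       | None => c k.+1 = c k
                       | Some (i, act) => alive crash i k /\ exec (c k) i act = Some (c k.+1)
                       end;
  run_msg_fair : forall k p, Stdlib.Lists.List.In p (net (c k)) -> correct crash (pdst p) ->
                   exists k', k <= k' /\ ~ Stdlib.Lists.List.In p (net (c k'));
  run_task_fair : forall k i id, correct crash i ->
                   ~ (forall k', k <= k' -> task_enabled (loc (c k') i) id);
  run_op_fair : forall k i, correct crash i ->
                   ~ (forall k', k <= k' -> op_enabled (loc (c k') i))
}.

End Model.

Arguments ARecv {V}. Arguments AFire {V}. Arguments AInvRead {V}. Arguments AOp {V}. Arguments AInvWrite {V}.
Arguments op {n V}. Arguments loc {n V}. Arguments net {n V}.
Arguments alive {n}. Arguments correct {n}. Arguments run n t {V} v0 w.

(* Main.v *)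
Require Import Defs.
From Stdlib Require Import Classical_Prop.
From mathcomp Require Import all_boot zify.
Set Warnings "-notation-overridden".
Set Implicit Arguments.
Unset Strict Implicit.

Section L.
Variables (n t : nat) (V : Type) (v0 : V) (w : 'I_n).
Notation Cf := (Config n V).
Notation Pk := (Packet n V).

Definition ws (c : Cf) (i j : 'I_n) := wsync n V (loc c i) j.
Definition isw (s d : 'I_n) (x : nat) (p : Pk) : bool :=
  (psrc n V p == s) && (pdst n V p == d) &&
  (if pmsg n V p is MWrite b _ then b == x else false).
Definition ist (s : 'I_n) (x : nat) (e : nat * Task n V) : bool :=
  if e.2 is TWrite j b _ then (j == s) && (b == x) else false.
Definition items (c : Cf) s d x :=
  count (isw s d x) (net c) + count (ist s x) (tasks n V (loc c d)).
Definition lo c s d := ws c d s.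
Definition hi c s d := minn (ws c s s) (ws c s d).+1.
Definition cnt l h x := count (fun m => m %% 2 == x) (iota l.+1 (h - l)).

Lemma cnt0 l x : cnt l l x = 0.
Proof. by rewrite /cnt subnn. Qed.
Lemma cntS l h x : l <= h -> cnt l h.+1 x = cnt l h x + (h.+1 %% 2 == x).
Proof.
move=> lh; rewrite /cnt; have -> : h.+1 - l = (h - l) + 1 by lia.
rewrite iotaD count_cat /=.
by rewrite addSn subnKC // addn0.
Qed.
Lemma cntL l h x : l < h -> cnt l h x = (l.+1 %% 2 == x) + cnt l.+1 h x.
Proof.
move=> lh; rewrite /cnt; have -> : h - l = (h - l.+1).+1 by lia.
by [].
Qed.
Lemma cnt_pos l h x : 0 < cnt l h x -> l < h.
Proof.
rewrite /cnt; case: (ltnP l h) => // hl.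
by have -> : h - l = 0 by lia.
Qed.

Lemma count_split (T : Type) (P a : pred T) (l : seq T) :
  count P l = count P (filter a l) + count P (filter (predC a) l).
Proof. elim: l => //= x l ->; case: (a x) => /=; lia. Qed.

Lemma mem_map_filter (T : Type) (U : eqType) (f : T -> U) (P : pred T) l y :
  y \in map f (filter P l) -> y \in map f l.
Proof.
elim: l => //= x l IH; case: (P x) => /=; rewrite !in_cons.
  by case/orP => [->|/IH ->]; rewrite ?orbT.
by move/IH => ->; rewrite orbT.
Qed.

Lemma uniq_map_filter (T : Type) (U : eqType) (f : T -> U) (P : pred T) l :
  uniq (map f l) -> uniq (map f (filter P l)).
Proof.
elim: l => //= x l IH /andP [Hx Hu]; case: (P x) => /=; last exact: IH.
rewrite IH // andbT; apply: contra Hx; exact: mem_map_filter.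
Qed.

Lemma filter_single (T : Type) (U : eqType) (f : T -> U) (y : U) l p r :
  uniq (map f l) -> [seq q <- l | f q == y] = p :: r -> r = [::].
Proof.
move=> Hu Hf.
have : count (fun q => f q == y) l <= 1.
  have -> : count (fun q => f q == y) l = count (pred1 y) (map f l) by rewrite count_map.
  by rewrite (count_uniq_mem _ Hu) leq_b1.
by rewrite -size_filter Hf; case: r {Hf}.
Qed.


Record Inv (c : Cf) : Prop := {
  IA : forall i j, ws c i j <= ws c i i;
  IB : forall i, ws c i i <= ws c w w;
  IC : forall s d, lo c s d <= hi c s d;
  ID : forall s d x, items c s d x = cnt (lo c s d) (hi c s d) x;
  IE1 : uniq (map (pid n V) (net c));
  IE2 : all (fun p => pid n V p < ctr n V c) (net c);
  IF1 : forall i, uniq (map fst (tasks n V (loc c i)));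
  IF2 : forall i, all (fun e => e.1 < ctr n V c) (tasks n V (loc c i)) }.

Lemma Inv_init : Inv (init_config n V v0).
Proof.
split => //= *; rewrite /items /lo /hi /ws /=; by rewrite ?cnt0.
Qed.

Definition mbit (m : Msg V) x := if m is MWrite b _ then b == x else false.

Lemma count_mkpkts s d x id i m ds :
  count (isw s d x) (mkpkts n V id i m ds) = ((i == s) && mbit m x) * count_mem d ds.
Proof.
case: m => [b v| |]; elim: ds id => [|e ds IH] id /=; rewrite ?muln0 ?andbF //;
  rewrite IH /isw /= ?andbF //.
rewrite mulnDr; congr (_ + _).
by case: (i == s); case: (b == x); rewrite ?andbF ?andbT //= eq_sym; case: (d == e).
Qed.

Lemma map_pid_mkpkts id i m ds :
  map (pid n V) (mkpkts n V id i m ds) = iota id (size ds).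
Proof. by elim: ds id => //= e ds IH id; rewrite IH. Qed.


Lemma count_rm (T : Type) (f : T -> nat) (P : pred T) l y p r :
  uniq (map f l) -> [seq q <- l | f q == y] = p :: r ->
  count P l = P p + count P [seq q <- l | f q != y].
Proof.
move=> Hu Hf; have Er := filter_single Hu Hf; subst r.
by rewrite (count_split P (fun q => f q == y) l) Hf /= addn0.
Qed.

Lemma uniq_app_mk (l : seq Pk) k i m ds :
  uniq (map (pid n V) l) -> all (fun p => pid n V p < k) l ->
  uniq (map (pid n V) (l ++ mkpkts n V k i m ds)) /\
  all (fun p => pid n V p < k + size ds) (l ++ mkpkts n V k i m ds).
Proof.
move=> Hu Ha; split.
  rewrite map_cat cat_uniq Hu map_pid_mkpkts iota_uniq andbT /=.
  apply/hasPn => x; rewrite mem_iota => /andP [Hk _].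
  apply/negP => Hm.
  have : all (fun y => y < k) (map (pid n V) l) by rewrite all_map.
  by move/allP => /(_ _ Hm); lia.
rewrite all_cat; apply/andP; split.
  by apply: sub_all Ha => p /= ; lia.
have : all (fun y => y < k + size ds) (map (pid n V) (mkpkts n V k i m ds)).
  rewrite map_pid_mkpkts; apply/allP => y; rewrite mem_iota; lia.
by rewrite all_map.
Qed.

Lemma Inv_frame c c' : Inv c ->
  (forall a b, ws c' a b = ws c a b) ->
  (forall s d x, items c' s d x = items c s d x) ->
  uniq (map (pid n V) (net c')) -> all (fun p => pid n V p < ctr n V c') (net c') ->
  (forall i, uniq (map fst (tasks n V (loc c' i)))) ->
  (forall i, all (fun e => e.1 < ctr n V c') (tasks n V (loc c' i))) -> Inv c'.
Proof.
move=> [HA HB HC HD _ _ _ _] Hw Hi H1 H2 H3 H4; split => //.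
- by move=> a b; rewrite !Hw; apply: HA.
- by move=> a; rewrite !Hw; apply: HB.
- by move=> a b; rewrite /lo /hi !Hw; apply: HC.
- by move=> a b x; rewrite Hi /lo /hi !Hw; apply: HD.
Qed.


Lemma all_filter_sub (T : Type) (a P : pred T) l : all a l -> all a (filter P l).
Proof. by elim: l => //= x l IH /andP [Hx Hl]; case: (P x) => /=; rewrite ?Hx IH. Qed.

Lemma step_recv c i id c' : Inv c -> exec n t V w c i (ARecv id) = Some c' -> Inv c'.
Proof.
move=> HI; rewrite /exec.
case Hf: [seq q <- net c | pid n V q == id] => [|p r] //.
case: ifP => // Hd.
have Hu := IE1 HI.
have Hcnt := fun P => count_rm P Hu Hf.
have Hnu : uniq (map (pid n V) [seq q <- net c | pid n V q != id]) by apply: uniq_map_filter.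
have Hna : all (fun q => pid n V q < ctr n V c) [seq q <- net c | pid n V q != id].
  by apply: all_filter_sub; exact: (IE2 HI).
have Hfr : ~~ (ctr n V c \in map fst (tasks n V (loc c i))).
  apply/negP => Hm'.
  have : all (fun y => y < ctr n V c) (map fst (tasks n V (loc c i))) by rewrite all_map; exact: (IF2 HI).
  by move/allP => /(_ _ Hm'); rewrite ltnn.
case Hm: (pmsg n V p) => [b v| |] [<-].
- apply: (Inv_frame HI) => //=.
  + by move=> a b'; rewrite /ws /=; case: ifP => // /eqP ->.
  + move=> s d x; rewrite /items /= [in RHS](Hcnt (isw s d x)) /isw Hm.
    case: (eqVneq d i) => [->|Hne] /=.
      rewrite Hd /ist /= andbT; lia.
    have -> : (pdst n V p == d) = false by rewrite (eqP Hd) eq_sym; apply/negbTE.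
    by rewrite andbF.
  + by apply: (sub_all _ Hna) => q /=; lia.
  + move=> j; case: ifP => [_|_] /=; last exact: (IF1 HI).
    by rewrite (IF1 HI) andbT.
  + move=> j; case: ifP => [_|_] /=; rewrite ?ltnSn /=; apply: (sub_all _ (IF2 HI _)) => e /=; lia.
- apply: (Inv_frame HI) => //=.
  + by move=> a b'; rewrite /ws /=; case: ifP => // /eqP ->.
  + move=> s d x; rewrite /items /= [in RHS](Hcnt (isw s d x)) /isw Hm andbF /=.
    by case: ifP => // /eqP ->.
  + by apply: (sub_all _ Hna) => q /=; lia.
  + move=> j; case: ifP => [_|_] /=; last exact: (IF1 HI).
    by rewrite (IF1 HI) andbT.
  + move=> j; case: ifP => [_|_] /=; rewrite ?ltnSn /=; apply: (sub_all _ (IF2 HI _)) => e /=; lia.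
- apply: (Inv_frame HI) => //=.
  + by move=> a b'; rewrite /ws /=; case: ifP => // /eqP ->.
  + move=> s d x; rewrite /items /= cats0 [in RHS](Hcnt (isw s d x)) /isw Hm andbF /=.
    by case: ifP => // /eqP ->.
  + by rewrite cats0.
  + by rewrite cats0 addn0.
  + move=> j; case: ifP => [_|_] //=; exact: (IF1 HI).
  + move=> j; rewrite addn0; case: ifP => [_|_] /=; exact: (IF2 HI).
Qed.

Lemma Inv_commit_nw c i s ds m : Inv c -> (forall x, mbit m x = false) ->
  wsync n V s = wsync n V (loc c i) -> tasks n V s = tasks n V (loc c i) ->
  Inv (commit n V c i s ds m).
Proof.
move=> HI Hm Hw Ht.
have [U1 U2] := uniq_app_mk i m ds (IE1 HI) (IE2 HI).
apply: (Inv_frame HI) => //=.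
- by move=> a b; rewrite /ws /=; case: ifP => // /eqP ->; rewrite Hw.
- move=> a b x; rewrite /items /= count_cat count_mkpkts Hm andbF mul0n addn0.
  by case: ifP => // /eqP ->; rewrite Ht.
- by move=> j; case: ifP => [_|_]; rewrite ?Ht; exact: (IF1 HI).
- move=> j; case: ifP => [_|_]; rewrite ?Ht; apply: (sub_all _ (IF2 HI _)) => e /=; lia.
Qed.

Lemma step_invr c i c' : Inv c -> exec n t V w c i AInvRead = Some c' -> Inv c'.
Proof.
move=> HI; rewrite /exec; case: ifP => // _ [<-].
by apply: Inv_commit_nw.
Qed.

Lemma step_op c i c' : Inv c -> exec n t V w c i AOp = Some c' -> Inv c'.
Proof.
move=> HI; rewrite /exec; case: ifP => // _.
by case: (op (loc c i)) => // [x|x|x] [<-]; apply: Inv_commit_nw.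
Qed.

Lemma mem_ds (P : pred 'I_n) d : count_mem d [seq j <- enum 'I_n | P j] = P d.
Proof.
rewrite count_uniq_mem; last by rewrite filter_uniq // enum_uniq.
by rewrite mem_filter mem_enum andbT.
Qed.

Lemma step_invw c i v c' : Inv c -> exec n t V w c i (AInvWrite v) = Some c' -> Inv c'.
Proof.
move=> HI; rewrite /exec; case: ifP => // /andP [/eqP Ei _] [<-]; subst i.
set W := ws c w w.
set c1 := commit _ _ _ _ _ _ _.
have [U1 U2] := uniq_app_mk w (MWrite V ((wsync n V (loc c w) w + 1) %% 2) v)
   [seq j <- enum 'I_n | updf n (wsync n V (loc c w)) w (wsync n V (loc c w) w + 1) j ==
      wsync n V (loc c w) w + 1 - 1] (IE1 HI) (IE2 HI).
have Hws : forall a b, ws c1 a b =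
   if a == w then (if b == w then W.+1 else ws c w b) else ws c a b.
  by move=> a b; rewrite /ws /=; case: ifP => // _; rewrite /updf addn1.
have Hit : forall s d x, items c1 s d x = items c s d x +
   ((w == s) && (W.+1 %% 2 == x)) * ((d != w) && (ws c w d == W)).
  move=> s d x; rewrite /items /= count_cat count_mkpkts mem_ds /= /updf.
  rewrite (_ : wsync n V (loc c w) w = W) // addn1 subn1 /=.
  rewrite (_ : tasks n V (if d == w then _ else loc c d) = tasks n V (loc c d)); last first.
    by case: ifP => // /eqP ->.
  case: (eqVneq d w) => [?|Hne]; last by rewrite ?(negbTE Hne) /= /ws; lia.
  subst d; rewrite eqxx /=.
  have -> : (W.+1 == W) = false by apply/eqP; lia.
  by rewrite !muln0; lia.
have HA := IA HI; have HB := IB HI; have HC := IC HI; have HD := ID HI.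
split => //.
- move=> a b; rewrite !Hws; case: (eqVneq a w) => [?|Ha]; last exact: HA.
  case: (eqVneq b w) => [?|Hb] //=; have := HA w b; rewrite -/W; lia.
- move=> a; rewrite !Hws eqxx; case: (eqVneq a w) => [?|Ha] //=.
  have := HB a; rewrite -/W; lia.
- move=> s d; rewrite /lo /hi !Hws.
  case: (eqVneq s w) => [?|Hs]; case: (eqVneq d w) => [?|Hd]; try subst s; try subst d => //=.
  + by rewrite ?eqxx; lia.
  + have := HC w d; rewrite /lo /hi -/W; lia.
  + by have := HC s w; rewrite /lo /hi.
  + by have := HC s d; rewrite /lo /hi.
- move=> s d x; rewrite Hit HD /lo /hi !Hws.
  case: (eqVneq s w) => [?|Hs]; case: (eqVneq d w) => [?|Hd]; try subst s; try subst d => //=.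
  + rewrite muln0 addn0 -/W.
    have -> : minn W W.+1 = W by lia.
    have -> : minn W.+1 W.+2 = W.+1 by lia.
    by rewrite !cnt0.
  + rewrite /= -/W.
    have HAd := HA w d; have HCd := HC w d; rewrite /lo /hi -/W in HCd.
    case: (eqVneq (ws c w d) W) => [Eq|Neq] /=.
      rewrite Eq in HCd *; have -> : minn W W.+1 = W by lia.
      have -> : minn W.+1 W.+1 = W.+1 by lia.
      rewrite cntS; last by lia.
      by rewrite muln1.
    rewrite muln0 addn0; congr cnt; lia.
  + simpl; lia.
  + simpl; lia.
- move=> j; rewrite /c1 /=; case: ifP => [_|_] //=; exact: (IF1 HI).
- move=> j; rewrite /c1 /=; case: ifP => [_|_] /=; apply: (sub_all _ (IF2 HI _)) => e /=; lia.
Qed.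

Lemma fire_core c c' i j b (f : 'I_n -> nat) (add : 'I_n -> nat -> nat) :
  Inv c -> j != i -> ws c i j < hi c j i -> b = (ws c i j).+1 %% 2 ->
  (forall a k, ws c' a k = if a == i then f k else ws c a k) ->
  (forall s d x, items c' s d x + (d == i) * ((j == s) && (b == x)) =
                 items c s d x + (i == s) * add d x) ->
  f j = (ws c i j).+1 ->
  (forall s, s != i -> s != j -> f s = ws c i s) ->
  (forall d x, d != i -> lo c i d <= minn (f i) (f d).+1 /\
     cnt (lo c i d) (minn (f i) (f d).+1) x = cnt (lo c i d) (hi c i d) x + add d x) ->
  (forall x, add i x = 0) ->
  (forall k, f k <= f i) ->
  ws c i i <= f i -> f i = ws c i i \/ f i <= ws c j j ->
  uniq (map (pid n V) (net c')) -> all (fun p => pid n V p < ctr n V c') (net c') ->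
  (forall i, uniq (map fst (tasks n V (loc c' i)))) ->
  (forall i, all (fun e => e.1 < ctr n V c') (tasks n V (loc c' i))) -> Inv c'.
Proof.
move=> HI Hji Hlt Hb Hws Hit Hfj Hfo Hfd Hadd Hfk Hfi1 Hfi2 U1 U2 U3 U4.
have HA := IA HI; have HB := IB HI; have HC := IC HI; have HD := ID HI.
split => //.
- move=> a k; rewrite !Hws; case: (eqVneq a i) => [->|Ha] /=; [exact: Hfk | exact: HA].
- move=> a; rewrite !Hws; case: (eqVneq a i) => [Ea|Ha]; case: (eqVneq w i) => [Ew|Hw] //=.
  + by rewrite Ea Ew.
  + rewrite Ea; case: Hfi2 => [->|?]; first exact: HB.
    by have := HB j; lia.
  + by rewrite Ew; have := HB a; rewrite Ew; lia.
- move=> s d; rewrite /lo /hi !Hws.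
  case: (eqVneq s i) => [Es|Hs]; case: (eqVneq d i) => [Ed|Hd] //=.
  + by subst s d; lia.
  + by subst s; have [] := Hfd d 0 Hd.
  + subst d; case: (eqVneq s j) => [Esj|Hsj].
      by subst s; rewrite Hfj; move: Hlt; rewrite /hi; lia.
    by rewrite Hfo //; have := HC s i.
  + exact: HC.
- move=> s d x.
  have := Hit s d x; rewrite HD /lo /hi !Hws.
  case: (eqVneq s i) => [Es|Hs]; case: (eqVneq d i) => [Ed|Hd] //=.
  + subst s d; rewrite (negbTE Hji) Hadd /= !muln0 !addn0 => ->.
    have -> : minn (ws c i i) (ws c i i).+1 = ws c i i by lia.
    have -> : minn (f i) (f i).+1 = f i by lia.
    by rewrite !cnt0.
  + subst s; rewrite mul0n addn0 mul1n => ->.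
    have [_ ->] := Hfd d x Hd; done.
  + subst d; rewrite mul1n mul0n addn0.
    case: (eqVneq s j) => [Esj|Hsj] /=.
      subst s; rewrite Hfj; move: Hlt; rewrite /hi => Hlt.
      rewrite (cntL _ Hlt) Hb; lia.
    by rewrite Hfo // addn0 => ->.
  + by rewrite !mul0n !addn0 => ->.
Qed.

Lemma items_commit c i s2 ds m s d x :
  items (commit n V c i s2 ds m) s d x = count (isw s d x) (net c) +
    ((i == s) && mbit m x) * count_mem d ds +
    count (ist s x) (tasks n V (if d == i then s2 else loc c d)).
Proof. by rewrite /items /= count_cat count_mkpkts. Qed.

Lemma ws_commit c i s2 ds m a k :
  ws (commit n V c i s2 ds m) a k = if a == i then wsync n V s2 k else ws c a k.
Proof. by rewrite /ws /=; case: ifP. Qed.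

Lemma commit_uniq c i s2 ds m (c' := commit n V c i s2 ds m) : Inv c ->
  uniq (map fst (tasks n V s2)) -> all (fun e => e.1 < ctr n V c) (tasks n V s2) ->
  [/\ uniq (map (pid n V) (net c')), all (fun p => pid n V p < ctr n V c') (net c'),
      (forall j, uniq (map fst (tasks n V (loc c' j))))
    & (forall j, all (fun e => e.1 < ctr n V c') (tasks n V (loc c' j)))].
Proof.
move=> HI H1 H2; have [U1 U2] := uniq_app_mk i m ds (IE1 HI) (IE2 HI).
split => // j; rewrite /c' /=; case: ifP => _ //; try exact: (IF1 HI).
- by apply: (sub_all _ H2) => e /=; lia.
- by apply: (sub_all _ (IF2 HI _)) => e /=; lia.
Qed.

Lemma cu1 c i s2 ds m : Inv c ->
  uniq (map fst (tasks n V s2)) -> all (fun e => e.1 < ctr n V c) (tasks n V s2) ->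
  uniq (map (pid n V) (net (commit n V c i s2 ds m))).
Proof. by move=> HI H1 H2; case: (commit_uniq i ds m HI H1 H2). Qed.
Lemma cu2 c i s2 ds m : Inv c ->
  uniq (map fst (tasks n V s2)) -> all (fun e => e.1 < ctr n V c) (tasks n V s2) ->
  all (fun p => pid n V p < ctr n V (commit n V c i s2 ds m)) (net (commit n V c i s2 ds m)).
Proof. by move=> HI H1 H2; case: (commit_uniq i ds m HI H1 H2). Qed.
Lemma cu3 c i s2 ds m : Inv c ->
  uniq (map fst (tasks n V s2)) -> all (fun e => e.1 < ctr n V c) (tasks n V s2) ->
  forall j, uniq (map fst (tasks n V (loc (commit n V c i s2 ds m) j))).
Proof. by move=> HI H1 H2; case: (commit_uniq i ds m HI H1 H2). Qed.
Lemma cu4 c i s2 ds m : Inv c ->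
  uniq (map fst (tasks n V s2)) -> all (fun e => e.1 < ctr n V c) (tasks n V s2) ->
  forall j, all (fun e => e.1 < ctr n V (commit n V c i s2 ds m)) (tasks n V (loc (commit n V c i s2 ds m) j)).
Proof. by move=> HI H1 H2; case: (commit_uniq i ds m HI H1 H2). Qed.

Lemma step_fire c i id c' : Inv c -> exec n t V w c i (AFire id) = Some c' -> Inv c'.
Proof.
move=> HI; rewrite /exec.
case Hf: [seq p <- tasks n V (loc c i) | p.1 == id] => [|e r] //.
case: ifP => // Hcond.
have Hu := IF1 HI i.
have Hcnt := fun P => count_rm P Hu Hf.
have Hfu : uniq (map fst [seq q <- tasks n V (loc c i) | q.1 != id]) by apply: uniq_map_filter.
have Hfa : all (fun e => e.1 < ctr n V c) [seq q <- tasks n V (loc c i) | q.1 != id].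
  exact: all_filter_sub (IF2 HI i).
case: e Hf Hcond Hcnt => id0 [j b v|j sn] /= Hf Hcond Hcnt.
- rewrite -/(ws c i j) -/(ws c i i) in Hcond *.
  have Hb : b = (ws c i j).+1 %% 2 by rewrite (eqP Hcond) addn1.
  have Hpos : 0 < items c j i b.
    rewrite /items (Hcnt (ist j b)) /ist /= !eqxx; lia.
  have Hlt : ws c i j < hi c j i.
    apply: (@cnt_pos _ _ b); rewrite -(ID HI j i b); exact: Hpos.
  have HC1 := IC HI i j; have HAij := IA HI i j; rewrite /lo /hi in HC1.
  have Hji : j != i.
    apply/eqP => E; subst j; move: Hlt; rewrite /hi; lia.
  have Hjj : (ws c i j).+1 <= ws c j j by move: Hlt; rewrite /hi; lia.
  have Hitg : forall s2 ds m, tasks n V s2 = [seq q <- tasks n V (loc c i) | q.1 != id] ->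
    forall s d x, items (commit n V c i s2 ds m) s d x + (d == i) * ((j == s) && (b == x)) =
      items c s d x + (i == s) * (mbit m x * count_mem d ds).
    move=> s2 ds m Ht s d x; rewrite items_commit /items.
    case: (eqVneq d i) => [->|Hd]; rewrite ?eqxx ?(negbTE Hd) ?Ht ?(Hcnt (ist s x)) /=;
      case: (i == s); rewrite /ist /=; lia.
  rewrite !addn1 subn1 /=.
  case: ifP => H1; last first.
    have HW1 : ws c i j != ws c i i by apply: contraFneq H1 => ->.
    case: ifP => H2 [<-].
    * apply: (fire_core (f := fun k => if k == j then (ws c i j).+1 else ws c i k)
              (add := fun d x => mbit (MWrite V ((ws c i j).+2 %% 2) (hist n V (loc c i) (ws c i j).+2)) x * count_mem d [:: j]) HI Hji Hlt Hb).
      -- move=> a k; rewrite ws_commit /= /updf; by case: ifP.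
      -- move=> s d x; exact: Hitg.
      -- by rewrite eqxx.
      -- by move=> s Hsi Hsj; rewrite (negbTE Hsj).
      -- move=> d x Hd; rewrite (eq_sym i j) (negbTE Hji) /=.
         have HCd := IC HI i d; rewrite /lo /hi in HCd *.
         case: (eqVneq d j) => [Edj|Hdj].
           subst d.
           have -> : minn (ws c i i) (ws c i j).+2 = (ws c i j).+2 by lia.
           have -> : minn (ws c i i) (ws c i j).+1 = (ws c i j).+1 by lia.
           rewrite (_ : nat_of_bool true + 0 = 1) // muln1; split; [lia | apply: cntS; lia].
         by rewrite muln0 addn0.
      -- by move=> x; rewrite /= (negbTE Hji) muln0.
      -- move=> k; rewrite (eq_sym i j) (negbTE Hji); case: ifP => // _; first lia.
         exact: (IA HI).
      -- by rewrite (eq_sym i j) (negbTE Hji).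
      -- by left; rewrite (eq_sym i j) (negbTE Hji).
      -- by apply: cu1.
      -- by apply: cu2.
      -- by apply: cu3.
      -- by apply: cu4.
    * apply: (fire_core (f := fun k => if k == j then (ws c i j).+1 else ws c i k)
              (add := fun d x => mbit (MProceed V) x * count_mem d [::]) HI Hji Hlt Hb).
      -- move=> a k; rewrite ws_commit /= /updf; by case: ifP.
      -- move=> s d x; exact: Hitg.
      -- by rewrite eqxx.
      -- by move=> s Hsi Hsj; rewrite (negbTE Hsj).
      -- move=> d x Hd; rewrite (eq_sym i j) (negbTE Hji) /= muln0 addn0.
         have HCd := IC HI i d; rewrite /lo /hi in HCd *.
         case: (eqVneq d j) => [Edj|Hdj]; last by [].
         subst d.
         have HL : (ws c i j).+1 = ws c i i by move: H2 HW1 HAij; case: ltngtP => //; lia.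
         have -> : minn (ws c i i) (ws c i j).+2 = ws c i i by lia.
         have -> : minn (ws c i i) (ws c i j).+1 = ws c i i by lia.
         split => //; lia.
      -- by move=> x; rewrite /= muln0.
      -- move=> k; rewrite (eq_sym i j) (negbTE Hji); case: ifP => // _; first lia.
         exact: (IA HI).
      -- by rewrite (eq_sym i j) (negbTE Hji).
      -- by left; rewrite (eq_sym i j) (negbTE Hji).
      -- by apply: cu1.
      -- by apply: cu2.
      -- by apply: cu3.
      -- by apply: cu4.
  + move=> [<-].
    have EL : ws c i j = ws c i i by move/eqP: H1 => [].
    set DS := [seq l <- enum 'I_n | _].
    apply: (fire_core (f := fun k => if k == j then (ws c i j).+1 else if k == i then (ws c i j).+1 else ws c i k)
              (add := fun d x => mbit (MWrite V ((ws c i j).+1 %% 2) v) x * count_mem d DS) HI Hji Hlt Hb).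
    * move=> a k; rewrite ws_commit /= /updf; by case: ifP.
    * move=> s d x; exact: Hitg.
    * by rewrite eqxx.
    * by move=> s Hsi Hsj; rewrite (negbTE Hsj) (negbTE Hsi).
    * move=> d x Hd; rewrite (eq_sym i j) (negbTE Hji) eqxx (negbTE Hd) /DS mem_ds /updf (negbTE Hd) /=.
      have HCd := IC HI i d; have HAd := IA HI i d; rewrite /lo /hi in HCd *.
      rewrite -EL in HCd HAd *.
      case: (eqVneq (ws c i d) (ws c i j)) => Hq.
        have -> : minn (ws c i j).+1 (if d == j then (ws c i j).+1 else ws c i d).+1 = (ws c i j).+1.
          by case: ifP => _; lia.
        rewrite Hq in HCd *; have -> : minn (ws c i j) (ws c i j).+1 = ws c i j by lia.
        rewrite muln1; split; [lia | apply: cntS; lia].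
      have Hdj : d != j by apply: contraNneq Hq => ->.
      rewrite (negbTE Hdj) muln0 addn0.
      have -> : minn (ws c i j).+1 (ws c i d).+1 = (ws c i d).+1 by lia.
      have -> : minn (ws c i j) (ws c i d).+1 = (ws c i d).+1 by lia.
      split; [lia | done].
    * move=> x; rewrite /DS mem_ds /updf eqxx.
      have -> : ((ws c i j).+1 == ws c i j) = false by apply/eqP; lia.
      by rewrite muln0.
    * move=> k; rewrite (eq_sym i j) (negbTE Hji) eqxx; case: ifP => // _; case: ifP => // _.
      have := IA HI i k; lia.
    * rewrite (eq_sym i j) (negbTE Hji) eqxx; lia.
    * by right; rewrite (eq_sym i j) (negbTE Hji) eqxx.
    * by apply: cu1.
    * by apply: cu2.
    * by apply: cu3.
    * by apply: cu4.
- move=> [<-].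
  apply: (Inv_frame HI); try solve [apply: cu1 HI Hfu Hfa | apply: cu2 HI Hfu Hfa |
                                    apply: cu3 HI Hfu Hfa | apply: cu4 HI Hfu Hfa].
  + by move=> a k; rewrite ws_commit; case: ifP => // /eqP ->.
  + move=> s d x; rewrite items_commit /= andbF mul0n addn0 /items.
    case: ifP => // /eqP ->; by rewrite [in RHS](Hcnt (ist s x)).
  + by apply: cu1.
  + by apply: cu2.
  + by apply: cu3.
  + by apply: cu4.
Qed.

Lemma step_inv c i act c' : Inv c -> exec n t V w c i act = Some c' -> Inv c'.
Proof.
case: act => [id|id|v| |]; [exact: step_recv | exact: step_fire | exact: step_invw |
  exact: step_invr | exact: step_op].
Qed.

Lemma fire_pre c i id id0 j b v r : Inv c ->
  [seq p <- tasks n V (loc c i) | p.1 == id] = (id0, TWrite n V j b v) :: r ->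
  b == (wsync n V (loc c i) j + 1) %% 2 ->
  [/\ j != i, (ws c i j).+1 <= ws c j j & ws c i j <= ws c i i].
Proof.
move=> HI Hf Hcond.
have Hcnt := fun P => count_rm P (IF1 HI i) Hf.
have Hpos : 0 < items c j i b.
  rewrite /items (Hcnt (ist j b)) /ist /= !eqxx; lia.
have Hlt : ws c i j < hi c j i.
  apply: (@cnt_pos _ _ b); rewrite -(ID HI j i b); exact: Hpos.
have HAij := IA HI i j.
split => //.
- apply/eqP => E; subst j; move: Hlt; rewrite /hi; lia.
- by move: Hlt; rewrite /hi; lia.
Qed.

Lemma updf_ge (f : 'I_n -> nat) j x k : f j <= x -> f k <= updf n f j x k.
Proof. by rewrite /updf; case: eqP => // ->. Qed.

Lemma step_props c i act c' : Inv c -> exec n t V w c i act = Some c' ->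
  [/\ forall a b, ws c a b <= ws c' a b,
      forall a, a != i -> loc c' a = loc c a,
      (forall x, act <> AInvWrite x) ->
         ws c' i i = ws c i i \/ exists2 j, j != i & ws c' i i <= ws c j j
    & forall x, op (loc c i) = OWrite x -> op (loc c' i) = OWrite x \/ op (loc c' i) = OIdle].
Proof.
move=> HI; case: act => [id|id|v| |]; rewrite /exec.
- case Hf: [seq q <- net c | pid n V q == id] => [|p r] //.
  case: ifP => // Hd.
  case Hm: (pmsg n V p) => [b v0'| |] [<-]; split => //=;
    try (move=> a b0; rewrite /ws /=; case: ifP => [/eqP ->|_]; exact: leqnn);
    try (by move=> a /negbTE ->);
    try (by move=> _; left; rewrite /ws /= eqxx);
    try (by move=> x; rewrite eqxx; left).
- case Hf: [seq p <- tasks n V (loc c i) | p.1 == id] => [|e r0] //.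
  case: ifP => // Hcond.
  case: e Hf Hcond => id0 [j b v|j sn] /= Hf Hcond.
  + have [Hji Hjj HAij] := fire_pre HI Hf Hcond.
    rewrite -/(ws c i j) -/(ws c i i) in Hcond *.
    rewrite !addn1 subn1 /=.
    case: ifP => H1; [|case: ifP => H2]; move=> [<-]; split => //=;
      try (by move=> a /negbTE ->);
      try (by move=> x; rewrite eqxx; left).
    * move=> a k; rewrite ws_commit /=; case: ifP => // /eqP ->.
      apply: leq_trans (updf_ge _ _) (updf_ge _ _) => //; first by move/eqP: H1 => [] ->.
      by rewrite /updf (negbTE Hji) /=.
    * by move=> _; right; exists j => //; rewrite ws_commit eqxx /= /updf (eq_sym i j) (negbTE Hji) eqxx.
    * move=> a k; rewrite ws_commit /=; case: ifP => // /eqP ->.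
      exact: updf_ge.
    * by move=> _; left; rewrite ws_commit eqxx /= /updf eq_sym (negbTE Hji).
    * move=> a k; rewrite ws_commit /=; case: ifP => // /eqP ->.
      exact: updf_ge.
    * by move=> _; left; rewrite ws_commit eqxx /= /updf eq_sym (negbTE Hji).
  + move=> [<-]; split => //=.
    * move=> a k; rewrite ws_commit; case: ifP => [/eqP ->|_]; exact: leqnn.
    * by move=> a /negbTE ->.
    * by move=> _; left; rewrite ws_commit eqxx.
    * by move=> x; rewrite eqxx; left.
- case: ifP => // /andP [/eqP Ei Hidle] [<-]; subst i; split => //=.
  + move=> a k; rewrite ws_commit /=; case: ifP => // /eqP ->.
    apply: (@updf_ge (wsync n V (loc c w)) w); lia.
  + by move=> a /negbTE ->.
  + by move=> H; have := H v.
  + by move=> x Hx; rewrite Hx in Hidle.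
- case: ifP => // Hidle [<-]; split => //=.
  + move=> a k; rewrite ws_commit; case: ifP => [/eqP ->|_]; exact: leqnn.
  + by move=> a /negbTE ->.
  + by move=> _; left; rewrite ws_commit eqxx.
  + by move=> x Hx; rewrite Hx in Hidle.
- case: ifP => // Hc.
  case E: (op (loc c i)) => [|x|x|x] // [<-]; split => //=;
    try (move=> a k; rewrite ws_commit; case: ifP => [/eqP ->|_]; exact: leqnn);
    try (by move=> a /negbTE ->);
    try (by move=> _; left; rewrite ws_commit eqxx);
    try (by move=> y; rewrite eqxx; right).
Qed.

Lemma In_filter (T : Type) (P : pred T) l y : List.In y l -> P y -> List.In y (filter P l).
Proof.
elim: l => //= z l IH [->|Hy] Py; first by rewrite Py; left.
by case: (P z) => /=; [right|]; apply: IH.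
Qed.

Lemma In_app_l (T : Type) (l1 l2 : seq T) y : List.In y l1 -> List.In y (l1 ++ l2).
Proof. by move=> H; apply: List.in_or_app; left. Qed.

Lemma count_witness (T : Type) (P : pred T) l : 0 < count P l -> exists y, List.In y l /\ P y.
Proof.
elim: l => //= z l IH; case Pz: (P z) => /= H; first by exists z; split => //; left.
by have [y [Hy Py]] := IH H; exists y; split => //; right.
Qed.

Lemma has_In (T : Type) (P : pred T) l y : List.In y l -> P y -> has P l.
Proof. elim: l => //= z l IH [->|Hy] Py; first by rewrite Py. by rewrite IH ?orbT. Qed.

Lemma has_filter_eq (T : Type) (P a : pred T) l : (forall y, P y -> a y) -> has P l -> has P (filter a l).
Proof.
move=> Hsub; elim: l => //= z l IH /orP [Pz|Hl].
  by rewrite (Hsub _ Pz) /= Pz.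
by case: (a z) => /=; rewrite IH ?orbT.
Qed.

Definition tP s x id0 (q : nat * Task n V) := (q.1 == id0) && ist s x q.

Lemma task_step c i act c' d s x id0 : Inv c -> exec n t V w c i act = Some c' ->
  ws c' d s = ws c d s -> x = (ws c d s).+1 %% 2 ->
  has (tP s x id0) (tasks n V (loc c d)) -> has (tP s x id0) (tasks n V (loc c' d)).
Proof.
move=> HI Hex Hws Hx Hh.
have [_ Hloc _ _] := step_props HI Hex.
case: (eqVneq d i) => [Edi|Hdi]; last by rewrite Hloc.
subst d; move: Hex Hws; case: act => [id|id|v| |]; rewrite /exec.
- case Hf: [seq q <- net c | pid n V q == id] => [|p r] //.
  case: ifP => // Hd.
  by case Hm: (pmsg n V p) => [b v| |] [<-] /=; rewrite eqxx //= Hh orbT.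
- case Hf: [seq p <- tasks n V (loc c i) | p.1 == id] => [|e r] //.
  case: ifP => // Hcond.
  case: (eqVneq id id0) => [Eid|Hid].
    subst id0.
    have Hr0 := filter_single (IF1 HI i) Hf; subst r.
    have : has (tP s x id) [:: e].
      rewrite -Hf; apply: has_filter_eq Hh => y /andP [] //.
    rewrite /= orbF => /andP [_].
    case: e Hf Hcond => id1 [j b v|j sn] //= Hf Hcond /andP [/eqP Ejs /eqP Ebx]; subst j b.
    rewrite !addn1 subn1 /=.
    case: ifP => H1; [|case: ifP => H2]; move=> [<-];
      rewrite ws_commit eqxx /= /updf eqxx /ws => ?; lia.
  move=> Hex _; case: e Hf Hcond Hex => id1 T /= Hf Hcond.
  have Hh' : has (tP s x id0) [seq q <- tasks n V (loc c i) | q.1 != id].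
    apply: has_filter_eq Hh => y /andP [/eqP -> _]; by rewrite eq_sym.
  case: T Hf Hcond => [j b v|j sn] Hf Hcond /=.
  + by rewrite !addn1 subn1 /=; case: ifP => H1; [|case: ifP => H2]; move=> [<-] /=; rewrite eqxx.
  + by move=> [<-] /=; rewrite eqxx.
- by case: ifP => // _ [<-] _ /=; rewrite eqxx.
- by case: ifP => // _ [<-] _ /=; rewrite eqxx.
- case: ifP => // _.
  by case: (op (loc c i)) => // [y|y|y] [<-] _ /=; rewrite eqxx.
Qed.

Lemma pkt_step c i act c' p s d x : Inv c -> exec n t V w c i act = Some c' ->
  List.In p (net c) -> ~ List.In p (net c') -> isw s d x p ->
  exists id0, has (tP s x id0) (tasks n V (loc c' d)).
Proof.
move=> HI; case: act => [id|id|v| |]; rewrite /exec.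
- case Hf: [seq q <- net c | pid n V q == id] => [|q r] //.
  case: ifP => // Hd.
  have Hr0 := filter_single (IE1 HI) Hf; subst r.
  move=> Hex Hin Hnin Hisw.
  case: (eqVneq (pid n V p) id) => [Ep|Ep]; last first.
    exfalso; apply: Hnin; move: Hex; case: (pmsg n V q) => [b v| |] [<-] /=;
      rewrite ?cats0; apply: In_filter => //; exact: Hin.
  have : List.In p [:: q] by rewrite -Hf; apply: In_filter => //; rewrite Ep.
  case=> // Eq; subst q.
  move: Hisw; rewrite /isw => /andP [/andP [/eqP Hs /eqP Hdd]]; subst s d.
  move: Hex; case Hm: (pmsg n V p) => [b v| |] // [<-] /= Hbx.
  exists (ctr n V c); rewrite Hd /= /tP /ist /= eqxx Hbx.
  by rewrite eqxx.
- case: [seq p <- tasks n V (loc c i) | p.1 == id] => [|e r] //.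
  case: ifP => // _.
  case: (run_task _ _ _ _ _) => [[s2 ds] m] [<-] Hin Hnin.
  by exfalso; apply: Hnin; apply: In_app_l.
- by case: ifP => // _ [<-] Hin Hnin; exfalso; apply: Hnin; apply: In_app_l.
- by case: ifP => // _ [<-] Hin Hnin; exfalso; apply: Hnin; apply: In_app_l.
- case: ifP => // _.
  by case: (op (loc c i)) => // [y|y|y] [<-] Hin Hnin; exfalso; apply: Hnin; apply: In_app_l.
Qed.

Section Run.
Variables (c : nat -> Cf) (a : nat -> option ('I_n * Action V)) (crash : 'I_n -> option nat).
Hypothesis Hr : run n t v0 w c a crash.

Lemma rstep k : c k.+1 = c k \/ exists i act, exec n t V w (c k) i act = Some (c k.+1).
Proof.
have := run_step _ _ _ _ _ _ _ _ Hr k; case: (a k) => [[i act] [_ H]|->]; last by left.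
by right; exists i, act.
Qed.

Lemma run_inv k : Inv (c k).
Proof.
elim: k => [|k IH]; first by rewrite (run_init _ _ _ _ _ _ _ _ Hr); exact: Inv_init.
by case: (rstep k) => [->|[i [act H]]] //; apply: step_inv H.
Qed.

Lemma run_mono k k' x y : k <= k' -> ws (c k) x y <= ws (c k') x y.
Proof.
elim: k' => [|k' IH]; first by rewrite leqn0 => /eqP ->.
rewrite leq_eqVlt => /orP [/eqP ->//|/IH H]; apply: leq_trans H _.
case: (rstep k') => [->//|[i [act Hex]]].
by have [Hm _ _ _] := step_props (run_inv k') Hex.
Qed.

Lemma find_trans (P : nat -> Prop) k k' : k <= k' -> P k -> ~ P k' ->
  exists k2, k <= k2 < k' /\ P k2 /\ ~ P k2.+1.
Proof.
elim: k' => [|k' IH] Hk Pk NP; first by move: Hk; rewrite leqn0 => /eqP E; subst k.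
case: (eqVneq k k'.+1) => [E|Hne]; first by subst k.
have Hk' : k <= k' by move: Hk Hne; rewrite leq_eqVlt eq_sym => /orP [->|].
case: (Classical_Prop.classic (P k')) => HP.
  by exists k'; split => //; apply/andP; split.
have [k2 [H1 H2]] := IH Hk' Pk HP; exists k2; split => //; lia.
Qed.

Lemma stuck s d B K : correct crash d -> (forall k, K <= k -> ws (c k) d s = B) ->
  0 < items (c K) s d (B.+1 %% 2) -> False.
Proof.
move=> Hcd HB Hpos; set x := B.+1 %% 2 in Hpos.
have Tcase : forall K1 id0, K <= K1 -> has (tP s x id0) (tasks n V (loc (c K1) d)) -> False.
  move=> K1 id0 HK1 Hh.
  have Hall : forall k, K1 <= k -> has (tP s x id0) (tasks n V (loc (c k) d)).
    elim=> [|k IH]; first by rewrite leqn0 => /eqP <-.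
    rewrite leq_eqVlt => /orP [/eqP <- //|Hlt]; have Hk := IH Hlt.
    case: (rstep k) => [->//|[i [act Hex]]].
    apply: task_step (run_inv k) Hex _ _ Hk.
      by rewrite !HB //; lia.
    by rewrite /x HB //; lia.
  apply: (run_task_fair _ _ _ _ _ _ _ _ Hr K1 d id0 Hcd) => k Hk.
  have := Hall k Hk; rewrite /task_enabled; apply: sub_has => q /andP [Hq].
  rewrite /ist; case: q Hq => id1 [j b v|//] /= Hq /andP [/eqP Ej /eqP Eb]; subst j b.
  by rewrite Hq /= /x -(HB k) ?addn1 //; lia.
move: Hpos; rewrite /items; case: (posnP (count (isw s d x) (net (c K)))) => Hp /=.
  rewrite Hp add0n => /count_witness [q [Hq Pq]].
  by apply: (Tcase K q.1) => //; apply: has_In Hq _; rewrite /tP eqxx.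
move=> _; have [p [Hin Pp]] := count_witness Hp.
have Hdp : pdst n V p = d by move: Pp; rewrite /isw => /andP [/andP [_ /eqP]].
have Hcp : correct crash (pdst n V p) by rewrite Hdp.
have [k' [Hk' Hnin]] := run_msg_fair _ _ _ _ _ _ _ _ Hr K p Hin Hcp.
have [k2 [/andP [Hk2a Hk2b] [Hin2 Hnin2]]] :=
  find_trans (P := fun k => List.In p (net (c k))) Hk' Hin Hnin.
case: (rstep k2) => [E|[i [act Hex]]]; first by rewrite E in Hnin2.
have [id0 Hh] := pkt_step (run_inv k2) Hex Hin2 Hnin2 Pp.
by apply: (Tcase k2.+1 id0) => //; lia.
Qed.

Lemma ev_const (f : nat -> nat) M dd : forall K0, (forall k k', K0 <= k <= k' -> f k <= f k') ->
  (forall k, K0 <= k -> f k <= M) -> M - f K0 <= dd ->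
  exists K, K0 <= K /\ forall k, K <= k -> f k = f K.
Proof.
elim: dd => [|dd IH] K0 Hm Hb Hd.
  exists K0; split => // k Hk; have := Hm K0 k; have := Hb k Hk.
  rewrite leqnn Hk /=; lia.
case: (Classical_Prop.classic (exists k, K0 <= k /\ f K0 < f k)) => [[k1 [Hk1 Hlt]]|Hno].
  have [K [HK1 HK2]] : exists K, k1 <= K /\ forall k, K <= k -> f k = f K.
    apply: IH.
    + by move=> k k' /andP [H1 H2]; apply: Hm; rewrite H2 (leq_trans Hk1 H1).
    + by move=> k Hk; apply: Hb; apply: leq_trans Hk1 Hk.
    + have := Hb k1 Hk1; lia.
  by exists K; split => //; apply: leq_trans Hk1 HK1.
exists K0; split => // k Hk; apply/eqP; rewrite eqn_leq.
have -> : f K0 <= f k by apply: Hm; rewrite leqnn Hk.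
rewrite andbT leqNgt; apply/negP => Hlt; apply: Hno; by exists k.
Qed.


Lemma lo_hi_eq s d K : correct crash d ->
  (forall k, K <= k -> ws (c k) d s = ws (c K) d s) -> lo (c K) s d = hi (c K) s d.
Proof.
move=> Hcd Hc; apply/eqP; rewrite eqn_leq (IC (run_inv K)) /= leqNgt; apply/negP => Hlt.
apply: (stuck (s := s) (d := d) (B := ws (c K) d s) (K := K) Hcd) => //.
rewrite (ID (run_inv K)) (cntL _ Hlt) /lo eqxx; lia.
Qed.

Lemma conv j K0 W0 : correct crash w -> correct crash j ->
  (forall k, K0 <= k -> ws (c k) w w = W0) -> exists K, forall k, K <= k -> ws (c k) w j = W0.
Proof.
move=> Hcw Hcj HW.
pose f := fun k => ws (c k) w j + ws (c k) j w + ws (c k) j j.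
have Hm : forall k k', K0 <= k <= k' -> f k <= f k'.
  move=> k k' /andP [_ H]; rewrite /f.
  have := run_mono w j H; have := run_mono j w H; have := run_mono j j H; lia.
have Hb : forall k, K0 <= k -> f k <= 3 * W0.
  move=> k Hk; rewrite /f; have := IA (run_inv k) w j; have := IA (run_inv k) j w.
  have := IB (run_inv k) j; rewrite HW //; lia.
have [K [HK0 HK]] := ev_const (dd := 3 * W0 - f K0) Hm Hb (leqnn _).
have Hc : forall k, K <= k -> [/\ ws (c k) w j = ws (c K) w j, ws (c k) j w = ws (c K) j w
                                 & ws (c k) j j = ws (c K) j j].
  move=> k Hk; have := HK k Hk; rewrite /f.
  have := run_mono w j Hk; have := run_mono j w Hk; have := run_mono j j Hk.
  move=> H1 H2 H3 H4; split; lia.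
have E1 := lo_hi_eq (s := w) (d := j) (K := K) Hcj (fun k Hk => let: And3 _ e _ := Hc k Hk in e).
have E2 := lo_hi_eq (s := j) (d := w) (K := K) Hcw (fun k Hk => let: And3 e _ _ := Hc k Hk in e).
rewrite /lo /hi in E1 E2.
have HWK := HW K HK0.
have := IA (run_inv K) j w; have := IA (run_inv K) w j.
rewrite HWK in E1 * => H1 H2.
have EA : ws (c K) w j = W0 by lia.
by exists K => k Hk; case: (Hc k Hk) => -> _ _.
Qed.

Lemma main k v : 2 * t < n -> #|[pred i : 'I_n | crash i != None]| <= t ->
  a k = Some (w, AInvWrite v) ->
  (forall k', k < k' ->
     (forall k'', k < k'' <= k' -> op (loc (c k'') w) <> OIdle) ->
     alive crash w k') ->
  exists k', k < k' /\ op (loc (c k') w) = OIdle.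
Proof.
move=> Hnt Hcr Ha Hal.
apply: Classical_Prop.NNPP => Hno.
have Hnot : forall k', k < k' -> op (loc (c k') w) <> OIdle by move=> k' Hk E; apply: Hno; exists k'.
have Hcw : correct crash w.
  rewrite /correct; case E: (crash w) => [tc|] //; exfalso.
  have H1 : k < (k + tc).+1 by lia.
  have := Hal (k + tc).+1 H1 (fun k'' H => Hnot k'' (proj1 (andP H))).
  rewrite /alive E; lia.
have := run_step _ _ _ _ _ _ _ _ Hr k; rewrite Ha => [[_ Hex]].
set W0 := ws (c k.+1) w w.
have Hop0 : op (loc (c k.+1) w) = OWrite W0.
  move: Hex; rewrite /exec /=; case: ifP => // _ [E].
  rewrite /W0 -E /ws /=; case: eqP => // _; rewrite /updf /=; by case: eqP.
have Hper : forall k', k.+1 <= k' -> op (loc (c k') w) = OWrite W0 /\ ws (c k') w w = W0.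
  elim=> [//|k' IH].
  rewrite leq_eqVlt => /orP [/eqP <- //|Hlt].
  have [IH1 IH2] := IH Hlt.
  case: (rstep k') => [->//|[i [act Hex']]].
  have [Hmo Hloc Hown Hopw] := step_props (run_inv k') Hex'.
  case: (eqVneq i w) => [Eiw|Hiw]; last by rewrite /ws !Hloc 1?eq_sym.
  subst i.
  have Hnw : forall x, act <> AInvWrite x.
    by move=> x Ex; subst act; move: Hex'; rewrite /exec IH1 /= andbF.
  split.
    case: (Hopw _ IH1) => // E'; exfalso; apply: (Hnot k'.+1) => //; lia.
  case: (Hown Hnw) => [->//|[j Hj Hle]].
  have := IB (run_inv k') j; have := Hmo w w; lia.
have Hall : forall j, correct crash j -> exists K, forall k', K <= k' -> ws (c k') w j = W0.
  move=> j Hcj; apply: (conv (K0 := k.+1) Hcw Hcj) => k' Hk'; by case: (Hper k' Hk').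
have Hcomb : forall s : seq 'I_n, exists K, forall k', K <= k' -> forall j, j \in s ->
    correct crash j -> ws (c k') w j = W0.
  elim=> [|j s [K HK]]; first by exists 0.
  case: (Classical_Prop.classic (correct crash j)) => Hcj.
    have [K' HK'] := Hall j Hcj; exists (maxn K K') => k' Hk' j'.
    rewrite in_cons => /orP [/eqP ->|Hj'] Hc'; [apply: HK' | apply: HK] => //; lia.
  exists K => k' Hk' j'; rewrite in_cons => /orP [/eqP -> //|Hj'] Hc'; exact: HK.
have [K HK] := Hcomb (enum 'I_n).
apply: (run_op_fair _ _ _ _ _ _ _ _ Hr (maxn K k.+1) w Hcw) => k' Hk'.
have Hk1 : k.+1 <= k' by lia.
rewrite /op_enabled /op_cond (proj1 (Hper k' Hk1)).
have Hsub : [pred j : 'I_n | crash j == None] \subset [pred j | wsync n V (loc (c k') w) j == W0].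
  apply/subsetP => j; rewrite !inE => /eqP Hj; apply/eqP; apply: (HK k') => //.
    lia.
  by rewrite mem_enum.
have := subset_leq_card Hsub.
have Hcard : #|[pred j : 'I_n | crash j == None]| + #|[pred i : 'I_n | crash i != None]| = #|'I_n|.
  rewrite -(cardC [pred i : 'I_n | crash i != None]) addnC; congr (_ + _).
  by apply: eq_card => j; rewrite !inE negbK.
rewrite card_ord in Hcard.
move=> H; apply: leq_trans H; rewrite leq_subLR.
apply: (@leq_trans (#|[pred i : 'I_n | crash i != None]| + #|[pred j : 'I_n | crash j == None]|)).
  by rewrite addnC Hcard.
by rewrite leq_add2r.
Qed.

End Run.

End L.

Theorem lemma8 (n t : nat) (V : Type) (v0 : V) (w : 'I_n)
    (c : nat -> Config n V) (a : nat -> option ('I_n * Action V))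
    (crash : 'I_n -> option nat) :
  2 * t < n ->
  #|[pred i : 'I_n | crash i != None]| <= t ->
  run n t v0 w c a crash ->
  forall (k : nat) (v : V), a k = Some (w, AInvWrite v) ->
  (* the writer does not crash while this write invocation is pending *)
  (forall k', k < k' ->
     (forall k'', k < k'' <= k' -> op (loc (c k'') w) <> OIdle) ->
     alive crash w k') ->
  exists k', k < k' /\ op (loc (c k') w) = OIdle.
Proof.
move=> Ht Hcr Hr k v Ha Hal.
exact: (main Hr Ht Hcr Ha Hal).
Qed.
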